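(* Let $V$ be a vertex operator algebra, $W_1,W_2,W_3$ weak $V$-modules and ${\mathcal Y}$ a quasi-intertwining operator of type $\binom{W_3}{W_1\,W_2}$. Then ${\mathcal Y}(w_{(1)},x)\in\mathcal H(W_2,W_3)$ for every $w_{(1)}\in W_1$, and the linear map $\psi_x:W_1\to\mathcal H(W_2,W_3)$, $\psi_x(w_{(1)})={\mathcal Y}(w_{(1)},x)$, is a $g(V)_{\ge0}$-homomorphism: $\psi_x(v_nw_{(1)})=v_n\psi_x(w_{(1)})$ for all $v\in V$, $n\ge0$, $w_{(1)}\in W_1$, where $v_n$ acts on $\mathcal H(W_2,W_3)$ via $Y_{\mathcal H}$.
   Context: A weak $V$-module is a module for $V$ regarded as a vertex algebra; $L(-1)=\omega_0$. A quasi-intertwining operator of type $\binom{W_3}{W_1\,W_2}$ is a linear map $W_1\otimes W_2\to W_3\{x\}$, $w_{(1)}\otimes w_{(2)}\mapsto{\mathcal Y}(w_{(1)},x)w_{(2)}=\sum_{n\in\mathbb C}(w_{(1)})_nw_{(2)}x^{-n-1}$, with $(w_{(1)})_nw_{(2)}=0$ for $\mathrm{Re}\,n\gg0$, the commutator formula $Y_3(v,x_1){\mathcal Y}(w_{(1)},x_2)w_{(2)}-{\mathcal Y}(w_{(1)},x_2)Y_2(v,x_1)w_{(2)}=\mathrm{Res}_{x_0}x_2^{-1}\delta(\frac{x_1-x_0}{x_2}){\mathcal Y}(Y_1(v,x_0)w_{(1)},x_2)w_{(2)}$, and $\frac{d}{dx}{\mathcal Y}(w_{(1)},x)={\mathcal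 Y}(L(-1)w_{(1)},x)$. $\mathcal H(W_2,W_3)$ is the space of $\phi(x)\in(\mathrm{Hom}(W_2,W_3))\{x\}$ such that: for each $w_{(2)}$, writing $\phi(x)w_{(2)}=\sum_{n\in\mathbb C}w^{(n)}x^{-n-1}$, $w^{(n)}=0$ for $\mathrm{Re}\,n\gg0$; $[L(-1),\phi(x)]=\frac{d}{dx}\phi(x)$; and for each $v\in V$ there is $k\ge0$ with $(x_1-x_2)^k(Y_3(v,x_1)\phi(x_2)-\phi(x_2)Y_2(v,x_1))=0$. The map $Y_{\mathcal H}(v,x_0)\phi(x)=\mathrm{Res}_{x_1}\big(x_0^{-1}\delta(\frac{x_1-x}{x_0})Y_3(v,x_1)\phi(x)-x_0^{-1}\delta(\frac{x-x_1}{-x_0})\phi(x)Y_2(v,x_1)\big)=\sum_nv_n\phi(x)x_0^{-n-1}$ makes $\mathcal H(W_2,W_3)$ a weak $V$-module; for $n\ge0$, $v_n\phi(x)=\mathrm{Res}_{x_1}(x_1-x)^n[Y_3(v,x_1)\phi(x)-\phi(x)Y_2(v,x_1)]$. *)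

(* Defs.v *)
From HB Require Import structures.
From mathcomp Require Import all_boot all_order all_algebra.
From mathcomp Require Import complex.
From mathcomp Require Import Rstruct.
Set Implicit Arguments. Unset Strict Implicit. Unset Printing Implicit Defensive.
Import Order.TTheory GRing.Theory Num.Theory.
Local Open Scope ring_scope.

Definition C : fieldType := (Rdefinitions.R)[i].

(* Conventions.  All formal series are represented by their coefficients:    *)
(*  - a vertex operator Y(v,x) = sum_{n in Z} v_n x^{-n-1} on a space W is    *)
(*    given by  Y : V -> int -> W -> W,  Y v n w = v_n w ;                    *)
(*  - a series phi(x) = sum_{n in C} phi_n x^{-n-1} in Hom(W2,W3){x} is given *)
(*    by  phi : C -> W2 -> W3,  phi n = phi_n.                                *)
(* Formal-calculus identities (Jacobi identity, commutator formula,          *)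
(* derivative property, locality, residue formula for Y_H) are written out   *)
(* coefficientwise.                                                          *)

Definition binz (m : int) (i : nat) : C :=
  (\prod_(j < i) (m%:~R - j%:R)) / (i`!)%:R.

(* a sum over i >= 0 whose terms vanish for large i: "sum_{i>=0} f i = sum_{i>=0} g i" *)
Definition fsum_eq (W : zmodType) (f g : nat -> W) : Prop :=
  exists N : nat, forall M : nat, (N <= M)%N ->
    \sum_(i < M) f i = \sum_(i < M) g i.

(* "a = sum_{i>=0} f i" for finitely supported f *)
Definition fsum_is (W : zmodType) (a : W) (f : nat -> W) : Prop :=
  exists N : nat, forall M : nat, (N <= M)%N -> a = \sum_(i < M) f i.

Section VOA.
Variable V : lmodType C.

Definition vop_bilinear (W : lmodType C) (Y : V -> int -> W -> W) : Prop :=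
  (forall (a : C) (u v : V) n w, Y (a *: u + v) n w = a *: Y u n w + Y v n w) /\
  (forall (a : C) v n (w w' : W), Y v n (a *: w + w') = a *: Y v n w + Y v n w').

Definition vop_truncation (W : lmodType C) (Y : V -> int -> W -> W) : Prop :=
  forall v w, exists N : int, forall n : int, N <= n -> Y v n w = 0.

Definition vop_vacuum (W : lmodType C) (Y : V -> int -> W -> W) (one : V) : Prop :=
  forall n w, Y one n w = if n == -1 then w else 0.

(* Jacobi identity for (V, Y) acting on W via YW, in its equivalent
   component (Borcherds) form: for u, v in V, w in W, p q r in Z,
   sum_{i>=0} binom(p,i) (u_{r+i} v)_{p+q-i} w
   = sum_{i>=0} (-1)^i binom(r,i) (u_{p+r-i} v_{q+i} w - (-1)^r v_{q+r-i} u_{p+i} w). *)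
Definition jacobi_identity (Y : V -> int -> V -> V)
  (W : lmodType C) (YW : V -> int -> W -> W) : Prop :=
  forall (u v : V) (w : W) (p q r : int),
    fsum_eq
      (fun i : nat => binz p i *: YW (Y u (r + i%:Z) v) (p + q - i%:Z) w)
      (fun i : nat => ((-1) ^+ i * binz r i) *:
          (YW u (p + r - i%:Z) (YW v (q + i%:Z) w)
           - ((-1) ^ r) *: YW v (q + r - i%:Z) (YW u (p + i%:Z) w))).

Definition is_VOA (Y : V -> int -> V -> V) (one omega : V) (c : C) : Prop :=
  let L := fun m : int => Y omega (m + 1) in
  [/\ vop_bilinear Y, vop_truncation Y, vop_vacuum Y one,
      ((forall v (n : int), 0 <= n -> Y v n one = 0) /\ (forall v, Y v (-1) one = v)) &
      jacobi_identity Y Y] /\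
  [/\
      (forall (m n : int) v,
         L m (L n v) - L n (L m v) =
         (m - n)%:~R *: L (m + n) v
         + ((if m + n == 0 then (m ^+ 3 - m)%:~R / 12%:R else 0) * c) *: v),
      (* L(-1)-derivative property: Y(L(-1)v,x) = d/dx Y(v,x) *)
      (forall v (n : int) w, Y (L (-1) v) n w = (- n)%:~R *: Y v (n - 1) w) &
      (* grading: V = (+)_{n in Z} V_(n), V_(n) = {v | L(0)v = n v},
         dim V_(n) finite, V_(n) = 0 for n << 0 *)
      [/\ (forall v, exists s : seq (int * V),
             v = \sum_(p <- s) p.2 /\ forall p, p \in s -> L 0 p.2 = p.1%:~R *: p.2),
          (forall n : int, exists b : seq V, forall v, L 0 v = n%:~R *: v ->
             exists a : nat -> C, v = \sum_(i < size b) a i *: nth 0 b i) &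
          (exists N : int, forall (n : int) v, n < N -> L 0 v = n%:~R *: v -> v = 0)]].

(* weak V-module (module for V regarded as a vertex algebra) *)
Definition is_weak_module (Y : V -> int -> V -> V) (one : V)
  (W : lmodType C) (YW : V -> int -> W -> W) : Prop :=
  [/\ vop_bilinear YW, vop_truncation YW, vop_vacuum YW one & jacobi_identity Y YW].

(* Quasi-intertwining operator of type (W3 / W1 W2):
   Yq w1 n w2 = (w1)_n w2,  Y(w1,x)w2 = sum_{n in C} (w1)_n w2 x^{-n-1}. *)
Definition is_quasi_intertwining (omega : V)
  (W1 W2 W3 : lmodType C)
  (Y1 : V -> int -> W1 -> W1) (Y2 : V -> int -> W2 -> W2) (Y3 : V -> int -> W3 -> W3)
  (Yq : W1 -> C -> W2 -> W3) : Prop :=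
  [/\
      (forall (a : C) (w1 w1' : W1) n w2, Yq (a *: w1 + w1') n w2 = a *: Yq w1 n w2 + Yq w1' n w2),
      (forall (a : C) w1 n (w2 w2' : W2), Yq w1 n (a *: w2 + w2') = a *: Yq w1 n w2 + Yq w1 n w2'),
      (forall w1 w2, exists N : int, forall n : C,
          (N%:~R < Re (n : Rdefinitions.R[i]))%R -> Yq w1 n w2 = 0),
      (* commutator formula, coefficient of x1^{-m-1} x2^{-n-1}:
         v_m (w1)_n w2 - (w1)_n v_m w2 = sum_{i>=0} binom(m,i) (v_i w1)_{m+n-i} w2 *)
      (forall (v : V) (m : int) (w1 : W1) (n : C) (w2 : W2),
          fsum_is (Y3 v m (Yq w1 n w2) - Yq w1 n (Y2 v m w2))
                  (fun i : nat => binz m i *: Yq (Y1 v i%:Z w1) (m%:~R + n - i%:R) w2)) &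
      (* d/dx Y(w1,x) = Y(L(-1)w1,x), with L(-1) = omega_0 *)
      (forall w1 (n : C) w2, Yq (Y1 omega 0 w1) n w2 = (- n) *: Yq w1 (n - 1) w2)].

Definition in_H (omega : V) (W2 W3 : lmodType C)
  (Y2 : V -> int -> W2 -> W2) (Y3 : V -> int -> W3 -> W3)
  (phi : C -> W2 -> W3) : Prop :=
  [/\
      (forall (a : C) n (w2 w2' : W2), phi n (a *: w2 + w2') = a *: phi n w2 + phi n w2'),
      (forall w2, exists N : int, forall n : C,
          (N%:~R < Re (n : Rdefinitions.R[i]))%R -> phi n w2 = 0),
      (* [L(-1), phi(x)] = d/dx phi(x), L(-1) = omega_0 *)
      (forall (n : C) w2, Y3 omega 0 (phi n w2) - phi n (Y2 omega 0 w2) = (- n) *: phi (n - 1) w2) &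
      (* locality: (x1-x2)^k (Y3(v,x1)phi(x2) - phi(x2)Y2(v,x1)) = 0;
         coefficient of x1^{-m-1} x2^{-n-1} *)
      (forall v : V, exists k : nat, forall (m : int) (n : C) (w2 : W2),
          \sum_(j < k.+1) (((-1) ^+ j * 'C(k, j)%:R) : C) *:
             (Y3 v (m + k%:Z - j%:Z) (phi (n + j%:R) w2)
              - phi (n + j%:R) (Y2 v (m + k%:Z - j%:Z) w2)) = 0)].

(* v_n phi(x) for n >= 0, the action Y_H on H(W2,W3):
   v_n phi(x) = Res_{x1} (x1 - x)^n [Y3(v,x1) phi(x) - phi(x) Y2(v,x1)],
   written coefficientwise: the coefficient of x^{-k-1} is
   sum_{i=0}^n binom(n,i) (-1)^i (v_{n-i} phi_{k+i} - phi_{k+i} v_{n-i}). *)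
Definition YH_nonneg (W2 W3 : lmodType C)
  (Y2 : V -> int -> W2 -> W2) (Y3 : V -> int -> W3 -> W3)
  (v : V) (n : nat) (phi : C -> W2 -> W3) : C -> W2 -> W3 :=
  fun (k : C) (w2 : W2) =>
    \sum_(i < n.+1) (((-1) ^+ i * 'C(n, i)%:R) : C) *:
       (Y3 v (n%:Z - i%:Z) (phi (k + i%:R) w2) - phi (k + i%:R) (Y2 v (n%:Z - i%:Z) w2)).
End VOA.

(* Main.v *)
Require Import Defs.
From HB Require Import structures.
From mathcomp Require Import all_boot all_order all_algebra.
From mathcomp Require Import complex.
From mathcomp Require Import Rstruct ring zify.
Import Order.TTheory GRing.Theory Num.Theory.
Local Open Scope ring_scope.
Lemma natC_neq0 (n : nat) : (n.+1%:R : C) != 0.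
Proof. have := @pnatr_eq0 (Rdefinitions.R[i]) n.+1. simpl. move=> ->. by []. Qed.
Lemma factC_neq0 (n : nat) : ((n`!)%:R : C) != 0.
Proof. have := @pnatr_eq0 (Rdefinitions.R[i]) (n`!). simpl. move=> ->.
  by rewrite -lt0n fact_gt0. Qed.

Definition Pz (a : int) (i : nat) : C := \prod_(j < i) (a%:~R - j%:R).

Lemma binz0 a : binz a 0 = 1.
Proof. by rewrite /binz big_ord0 fact0 divr1. Qed.

Lemma binz_vanish (m : int) (l : nat) : 0 <= m -> m < l%:Z -> binz m l = 0.
Proof.
case: m => // m _ /= Hml.
have Hl : (m < l)%N by [].
rewrite /binz (bigD1 (Ordinal Hl)) //= subrr mul0r mul0r //.
Qed.

Lemma binzS (a : int) (i : nat) :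
  binz a i.+1 - binz (a - 1) i.+1 = binz (a - 1) i.
Proof.
rewrite /binz -mulrBl.
have -> : \prod_(j < i.+1) (a%:~R - j%:R) = a%:~R * Pz (a - 1) i.
  rewrite big_ord_recl /Pz /=; congr (_ * _); first by rewrite subr0. apply: eq_bigr => j _.
  rewrite /bump /= rmorphB /= -natr1. by ring.
have -> : \prod_(j < i.+1) ((a-1)%:~R - j%:R) = Pz (a - 1) i * ((a-1)%:~R - i%:R).
  by rewrite big_ord_recr.
rewrite -/(Pz (a-1) i) factS natrM.
apply: (@mulIf _ (i.+1%:R * (i`!)%:R)).
  by rewrite mulf_neq0 ?natC_neq0 ?factC_neq0.
rewrite divfK ?mulf_neq0 ?natC_neq0 ?factC_neq0 // [RHS]mulrCA divfK ?factC_neq0 //.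
rewrite rmorphB /= -natr1. by ring.
Qed.

Definition S (k : nat) (f : int -> C) (a : int) : C :=
  \sum_(j < k.+1) (((-1) ^+ j * 'C(k, j)%:R) : C) * f (a - j%:Z).

Lemma S_rec k f a : S k.+1 f a = S k f a - S k f (a - 1).
Proof.
rewrite /S big_ord_recl /=.
under eq_bigr => j _ do rewrite /bump /= binS natrD mulrDr mulrDl.
rewrite big_split /= big_ord_recr /= (@bin_small k k.+1) //.
rewrite [X in _ = X - _]big_ord_recl /= !expr0 !bin0 !mul1r !subr0.
have -> : \sum_(i < k) (-1) ^+ (1 + i) * 'C(k, i.+1)%:R * f (a - Posz (1 + i)%N) =
   \sum_(i < k) (-1) ^+ bump 0 i * 'C(k, bump 0 i)%:R * f (a - Posz (bump 0 i)) :> C.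
  by apply: eq_bigr => j _; rewrite /bump /= !add1n.
have -> : \sum_(i < k.+1) (-1) ^+ (1 + i) * 'C(k, i)%:R * f (a - Posz (1 + i)%N) =
  - \sum_(j < k.+1) (-1) ^+ j * 'C(k, j)%:R * f (a - 1 - j%:Z) :> C.
  rewrite -sumrN; apply: eq_bigr => j _.
  rewrite add1n exprS !mulN1r !mulNr; congr (- (_ * f _)).
  rewrite -addn1 PoszD opprD addrA addrAC.
by []. by rewrite mulr0 mul0r addr0 addrA.
Qed.

Lemma S_binz k : forall i a, (i <= k)%N -> S k (fun x => binz x i) a = (if i == k then 1 else 0).
Proof.
elim: k => [|k IH] i a.
  rewrite leqn0 => /eqP ->; by rewrite /S big_ord1 /= expr0 bin0 !mul1r binz0.
rewrite S_rec; case: i => [|i] Hi.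
  by rewrite !IH // subrr.
rewrite eqSS -(IH i (a - 1)) //.
rewrite /S -sumrB; apply: eq_bigr => j _.
rewrite -mulrBr; congr (_ * _).
have -> : a - 1 - j%:Z = (a - j%:Z) - 1 by rewrite addrAC.
exact: binzS.

Qed.

Lemma fsum_trunc (W : zmodType) (a : W) (f : nat -> W) (L : nat) :
  fsum_is a f -> (forall l, (L <= l)%N -> f l = 0) -> a = \sum_(l < L) f l.
Proof.
move=> [N HN] Hf; rewrite (HN (maxn N L)) ?leq_maxl //.
rewrite -!(big_mkord xpredT) (@big_cat_nat _ _ _ L 0 (maxn N L)) ?leq_maxr // /=.
rewrite [X in _ + X = _]big1_seq ?addr0 // => l /andP [_].
by rewrite mem_iota subnKC ?leq_maxr // => /andP [Hl _]; apply: Hf.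
Qed.

Lemma lin0 (A B : lmodType C) (f : A -> B) :
  (forall (a : C) x y, f (a *: x + y) = a *: f x + f y) -> f 0 = 0.
Proof.
move=> H; have := H 1 0 0; rewrite !scale1r addr0 => E.
by apply: (addrI (f 0)); rewrite addr0 -E.
Qed.

Lemma intrn (n : nat) : ((Posz n)%:~R : C) = n%:R.
Proof. by []. Qed.

Theorem mainTheorem13
  (V : lmodType C) (Y : V -> int -> V -> V) (one omega : V) (c : C)
  (W1 W2 W3 : lmodType C)
  (Y1 : V -> int -> W1 -> W1) (Y2 : V -> int -> W2 -> W2) (Y3 : V -> int -> W3 -> W3)
  (Yq : W1 -> C -> W2 -> W3) :
  is_VOA Y one omega c ->
  is_weak_module Y one Y1 -> is_weak_module Y one Y2 -> is_weak_module Y one Y3 ->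
  is_quasi_intertwining omega Y1 Y2 Y3 Yq ->
  (forall w1 : W1, in_H omega Y2 Y3 (Yq w1)) /\
  (forall (v : V) (n : nat) (w1 : W1) (k : C) (w2 : W2),
     Yq (Y1 v n%:Z w1) k w2 = YH_nonneg Y2 Y3 v n (Yq w1) k w2).
Proof.
move=> _ [_ Htr1 _ _] _ _ [Hl1 Hl2 Htr Hcom Hder].
have Yq0 : forall n w2, Yq 0 n w2 = 0.
  move=> n w2; exact: (@lin0 _ _ (fun w => Yq w n w2)).
split.
- move=> w1; split.
  + by move=> *; apply: Hl2.
  + exact: Htr.
  + move=> n w2.
    rewrite (@fsum_trunc _ _ _ 1 (Hcom omega 0 w1 n w2)).
      by rewrite big_ord1 binz0 scale1r -Hder; congr (Yq _ _ _); rewrite /= (intrn 0) ?mulr0n ?add0r ?subr0.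
    move=> l Hl; rewrite binz_vanish ?scale0r //.
  + move=> v; have [N HN] := Htr1 v w1.
    exists `|N|%N => m n w2.
    set k := `|N|%N.
    have E : forall j : 'I_k.+1,
      Y3 v (m + k%:Z - j%:Z) (Yq w1 (n + j%:R) w2) - Yq w1 (n + j%:R) (Y2 v (m + k%:Z - j%:Z) w2)
      = \sum_(l < k) binz (m + k%:Z - j%:Z) l *: Yq (Y1 v l w1) ((m + k%:Z)%:~R + n - l%:R) w2.
      move=> j; rewrite (@fsum_trunc _ _ _ k (Hcom v _ w1 _ w2)).
        apply: eq_bigr => l _; congr (_ *: Yq _ _ _).
        rewrite !rmorphB /= !rmorphD /= !intrn. ring.
      move=> l Hl; rewrite HN ?Yq0 ?scaler0 //.
      apply: le_trans (lez_abs N) _; by rewrite lez_nat.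
    under eq_bigr => j _ do rewrite E scaler_sumr.
    rewrite exchange_big /= big1 // => l _.
    under eq_bigr => j _ do rewrite scalerA.
    rewrite -scaler_suml.
    have := @S_binz k l (m + k%:Z) (ltnW (ltn_ord l)).
    rewrite /S (ltn_eqF (ltn_ord l)) => ->.
    by rewrite scale0r.
- move=> v n w1 k w2; rewrite /YH_nonneg.
  have E : forall i : 'I_n.+1,
      Y3 v (n%:Z - i%:Z) (Yq w1 (k + i%:R) w2) - Yq w1 (k + i%:R) (Y2 v (n%:Z - i%:Z) w2)
      = \sum_(l < n.+1) binz (n%:Z - i%:Z) l *: Yq (Y1 v l w1) (k + n%:R - l%:R) w2.
    move=> i; rewrite (@fsum_trunc _ _ _ n.+1 (Hcom v _ w1 _ w2)).
      apply: eq_bigr => l _; congr (_ *: Yq _ _ _).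
      rewrite !rmorphB /= !intrn. ring.
    move=> l Hl; rewrite binz_vanish ?scale0r //.
      by rewrite subr_ge0 lez_nat -ltnS.
    lia.
  under eq_bigr => i _ do rewrite E scaler_sumr.
  rewrite exchange_big /=.
  under eq_bigr => l _ do (under eq_bigr => i _ do rewrite scalerA; rewrite -scaler_suml).
  rewrite big_ord_recr /= big1 ?add0r.
    have := @S_binz n n n%:Z (leqnn n).
    rewrite /S eqxx => ->; rewrite scale1r.
    by congr (Yq _ _ _); rewrite addrK.
  move=> l _.
  have := @S_binz n l n%:Z (ltnW (ltn_ord l)).
  rewrite /S (ltn_eqF (ltn_ord l)) => ->.
  by rewrite scale0r.
Qed.
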